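(* In the setting described in the context, let $\mathbf{w}:\mathcal{K}(\mathbb{R}^n)\to\mathbb{R}$ be a bounded function satisfying $\mathbf{w}(X)-\mathbf{w}(F(X))=\xi(X)\,(1-\mathbf{w}(F(X)))$ for all $X\in\mathcal{K}(\mathbb{R}^n)$, where $\xi(X):=1-\exp(-\Psi(X))$, and such that $\lim_{k\to\infty}\mathbf{w}(\mathcal{R}(X,k))=0$ for every $X\in\mathcal{K}_{\mathcal{D}_{\mathcal{A}}}(\mathbb{R}^n)$. Then $\mathbf{w}=\mathcal{W}$ on $\mathcal{K}(\mathbb{R}^n)$.
   Context: Let $\|\cdot\|$ be a norm on $\mathbb{R}^n$ and $\mathrm{dist}(x,\Omega):=\inf_{y\in\Omega}\|x-y\|$. Let $\mathcal{K}(\mathbb{R}^n)$ denote the nonempty compact subsets of $\mathbb{R}^n$. Consider $x_{k+1}=f(x_k,u_k)$ with $f:\mathbb{R}^n\times\mathbb{R}^m\to\mathbb{R}^n$ continuous and inputs $u_k\in U$, $U\subset\mathbb{R}^m$ nonempty compact. Define $F(X):=\{f(x,u):x\in X,u\in U\}$. For $x\in\mathbb{R}^n$ and $\pi:\mathbb{Z}_+\to U$, $\varphi_x^\pi(0)=x$, $\varphi_x^\pi(k+1)=f(\varphi_x^\pi(k),\pi(k))$; $\mathcal{R}(X,k):=\{\varphi_x^\pi(k):x\in X,\pi\in U^{\mathbb{Z}_+}\}$. Let $\mathcal{A}\in\mathcal{K}(\mathbb{R}^n)$ be controlled invariant. Assume local $\ell_p$-stabilizability: there exist $r>0$, $M\ge1$,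 $p>0$, $\lambda:[0,r]\times\mathbb{Z}_+\to\mathbb{R}_+$ such that (1) for each $k$, $s\mapsto\lambda(s,k)$ is continuous, nondecreasing, $\lambda(0,k)=0$; for each $s$, $k\mapsto\lambda(s,k)$ is nonincreasing, $\lambda(s,0)\le s$; (2) $\sum_{k}\lambda(r,k)^p<\infty$; (3) for every $x$ with $\mathrm{dist}(x,\mathcal{A})\le r$ there is $\pi\in U^{\mathbb{Z}_+}$ with $\mathrm{dist}(\varphi_x^\pi(k),\mathcal{A})\le M\lambda(\mathrm{dist}(x,\mathcal{A}),k)$ for all $k$. Let $\mathcal{D}_{\mathcal{A}}:=\{x:\exists\pi\in U^{\mathbb{Z}_+},\ \lim_{k\to\infty}\mathrm{dist}(\varphi_x^\pi(k),\mathcal{A})=0\}$ and $\mathcal{K}_{\mathcal{D}_{\mathcal{A}}}(\mathbb{R}^n):=\{X\in\mathcal{K}(\mathbb{R}^n):X\cap\mathcal{D}_{\mathcal{A}}\neq\emptyset\}$. Let $\alpha:\mathbb{R}^n\to\mathbb{R}_+$ be continuous with $\underline{\alpha}\,\mathrm{dist}(x,\mathcal{A})^{\bar p}\le\alpha(x)\le\overline{\alpha}\,\mathrm{dist}(x,\mathcal{A})^{\bar p}$, constants $\underline{\alpha},\overline{\alpha}>0$, $\bar p\ge p$. Define $\Psi(X):=\inf_{y\in X}\alpha(y)$, $\mathcal{V}(X):=\sum_{k=0}^\infty\Psi(\mathcal{R}(X,k))\in[0,\infty]$, and $\mathcal{W}(X):=1-\exp(-\mathcal{V}(X))$ with the convention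 $\exp(-\infty)=0$. *)

(* Defs.v *)
From HB Require Import structures.
From mathcomp Require Import all_boot all_order all_algebra.
From mathcomp Require Import all_classical all_reals all_analysis.
Set Implicit Arguments. Unset Strict Implicit. Unset Printing Implicit Defensive.
Import Order.TTheory GRing.Theory Num.Theory.
Import numFieldNormedType.Exports.
Local Open Scope classical_set_scope.
Local Open Scope ring_scope.

Section Defs.
Variables (R : realType) (n m : nat).
Local Notation V := 'rV[R]_n.
Local Notation Ui := 'rV[R]_m.

Definition is_norm (nrm : V -> R) : Prop :=
  [/\ forall x, nrm x = 0 -> x = 0,
      forall (a : R) x, nrm (a *: x) = `|a| * nrm x &
      forall x y, nrm (x + y) <= nrm x + nrm y].

Definition dist (nrm : V -> R) (x : V) (Om : set V) : R :=
  inf [set nrm (x - y) | y in Om].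

Definition Kset (X : set V) : Prop := compact X /\ X !=set0.

Definition Fimg (f : V -> Ui -> V) (U : set Ui) (X : set V) : set V :=
  [set z | exists x, exists u, [/\ X x, U u & z = f x u]].

Definition admissible (U : set Ui) (pi : nat -> Ui) : Prop := forall k, U (pi k).

Fixpoint traj (f : V -> Ui -> V) (x : V) (pi : nat -> Ui) (k : nat) : V :=
  match k with
  | 0%N => x
  | k'.+1 => f (traj f x pi k') (pi k')
  end.

Definition Reach (f : V -> Ui -> V) (U : set Ui) (X : set V) (k : nat) : set V :=
  [set z | exists x, exists pi, [/\ X x, admissible U pi & z = traj f x pi k]].

Definition controlled_invariant (f : V -> Ui -> V) (U : set Ui) (A : set V) : Prop :=
  forall x, A x -> exists u, U u /\ A (f x u).

Definition local_lp_stabilizable (nrm : V -> R) (f : V -> Ui -> V) (U : set Ui)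
  (A : set V) (p : R) : Prop :=
  exists (r M : R) (lam : R -> nat -> R),
     0 < r /\ 1 <= M /\ 0 < p /\
     (forall s k, 0 <= s <= r -> 0 <= lam s k) /\
     (forall k, {within `[0, r], continuous (fun s => lam s k)}) /\
     (forall k s t, 0 <= s -> s <= t -> t <= r -> lam s k <= lam t k) /\
     (forall k, lam 0 k = 0) /\
     (forall s k l, 0 <= s <= r -> (k <= l)%N -> lam s l <= lam s k) /\
     (forall s, 0 <= s <= r -> lam s 0%N <= s) /\
     (\sum_(0 <= k <oo) ((lam r k) `^ p)%:E < +oo)%E /\
     (forall x, dist nrm x A <= r ->
        exists pi, admissible U pi /\
          forall k, dist nrm (traj f x pi k) A <= M * lam (dist nrm x A) k).

Definition DA (nrm : V -> R) (f : V -> Ui -> V) (U : set Ui) (A : set V) : set V :=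
  [set x | exists pi, admissible U pi /\
     (fun k => dist nrm (traj f x pi k) A) @ \oo --> (0 : R)].

Definition Psi (alpha : V -> R) (X : set V) : R := inf [set alpha y | y in X].

Definition xi (alpha : V -> R) (X : set V) : R := 1 - expR (- Psi alpha X).

Definition Vfun (alpha : V -> R) (f : V -> Ui -> V) (U : set Ui) (X : set V) : \bar R :=
  (\sum_(0 <= k <oo) (Psi alpha (Reach f U X k))%:E)%E.

(* W(X) = 1 - exp(-V(X)), with exp(-oo) = 0 *)
Definition Wfun (alpha : V -> R) (f : V -> Ui -> V) (U : set Ui) (X : set V) : R :=
  match Vfun alpha f U X with
  | EFin v => 1 - expR (- v)
  | _ => 1
  end.

End Defs.

(* Main.v *)
Require Import Defs.
From HB Require Import structures.
From mathcomp Require Import all_boot all_order all_algebra.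
From mathcomp Require Import all_classical all_reals all_analysis.
From mathcomp Require Import ring lra.
Import Order.TTheory GRing.Theory Num.Theory.
Import numFieldNormedType.Exports.
Local Open Scope classical_set_scope.
Local Open Scope ring_scope.


Section H.
Variables (R : realType) (n m : nat).
Variable f : 'rV[R]_n -> 'rV[R]_m -> 'rV[R]_n.
Variable U : set 'rV[R]_m.

Lemma traj_ext x pi pi' k : (forall j, (j < k)%N -> pi j = pi' j) ->
  traj f x pi k = traj f x pi' k.
Proof.
elim: k => [//|k IH] H /=.
rewrite IH; last by move=> j jk; apply: H; exact: ltnW.
by rewrite H.
Qed.

Lemma traj_cat x pi pi' k j :
  traj f x (fun i => if (i < k)%N then pi i else pi' (i - k)%N) (j + k) =
  traj f (traj f x pi k) pi' j.
Proof.
elim: j => [|j IH].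
  by rewrite add0n; apply: traj_ext => i ->.
rewrite addSn /= IH; congr f.
by rewrite ltnNge leq_addl /= addnK.
Qed.

Lemma Reach_S X k : U !=set0 ->
  Reach f U X k.+1 = Fimg f U (Reach f U X k).
Proof.
move=> _; apply/seteqP; split => z.
  move=> [x [pi [Xx adm ->]]] /=.
  exists (traj f x pi k), (pi k); split => //.
  by exists x, pi.
move=> [y [u [[x [pi [Xx adm ->]]] Uu ->]]].
exists x, (fun j => if j == k then u else pi j); split => //.
  by move=> j; case: ifP => _ //; apply: adm.
rewrite /= eqxx; congr f; apply: traj_ext => j jk.
by rewrite (ltn_eqF jk).
Qed.

Lemma Reach_0 X : U !=set0 -> Reach f U X 0 = X.
Proof.
move=> [u0 Uu0]; apply/seteqP; split => z.
  by move=> [x [pi [Xx _ ->]]].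
by move=> Xz; exists z, (fun=> u0); split.
Qed.

Lemma Kset_Fimg X :
  continuous (fun xu : 'rV[R]_n * 'rV[R]_m => f xu.1 xu.2) ->
  compact U -> U !=set0 -> Kset X -> Kset (Fimg f U X).
Proof.
move=> hf cU [u0 Uu0] [cX [x0 Xx0]].
have -> : Fimg f U X = (fun xu : 'rV[R]_n * 'rV[R]_m => f xu.1 xu.2) @` (X `*` U).
  apply/seteqP; split => z.
    by move=> [x [u [Xx Uu ->]]]; exists (x, u).
  by move=> [[x u] [/= Xx Uu] <-]; exists x, u.
split.
  apply: continuous_compact; last exact: compact_setX.
  exact: continuous_subspaceT.
by exists (f x0 u0), (x0, u0).
Qed.

Lemma Kset_Reach X k :
  continuous (fun xu : 'rV[R]_n * 'rV[R]_m => f xu.1 xu.2) ->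
  compact U -> U !=set0 -> Kset X -> Kset (Reach f U X k).
Proof.
move=> hf cU U0 KX; elim: k => [|k IH]; first by rewrite Reach_0.
by rewrite Reach_S //; apply: Kset_Fimg.
Qed.

End H.

Lemma nrm_ge0 (R : realType) n (nrm : 'rV[R]_n -> R) : is_norm nrm -> forall x, 0 <= nrm x.
Proof.
move=> [_ hZ hD] x.
have h0 : nrm 0 = 0 by have := hZ 0 0; rewrite scale0r normr0 mul0r.
have : nrm (x + (-1) *: x) <= nrm x + nrm ((-1) *: x) by apply: hD.
rewrite hZ normrN normr1 mul1r scaleN1r subrr h0.
lra.
Qed.

Lemma dist_ge0 (R : realType) n (nrm : 'rV[R]_n -> R) x Om :
  is_norm nrm -> 0 <= dist nrm x Om.
Proof.
move=> hn; rewrite /dist.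
have [[y Omy]|nOm] := pselect (Om !=set0); last first.
  have -> : Om = set0 by apply/seteqP; split => y // Omy; apply: nOm; exists y.
  by rewrite image_set0 inf0.
apply: lb_le_inf; first by exists (nrm (x - y)), y.
by move=> _ [z _ <-]; apply: nrm_ge0.
Qed.

Lemma Psi_ge (R : realType) n (alpha : 'rV[R]_n -> R) X c :
  X !=set0 -> (forall y, X y -> c <= alpha y) -> c <= Psi alpha X.
Proof.
move=> [y Xy] H; apply: lb_le_inf; first by exists (alpha y), y.
by move=> _ [z Xz <-]; apply: H.
Qed.

Lemma lam_cvg0 (R : realType) (lam : nat -> R) p : 0 < p -> (forall k, 0 <= lam k) ->
  (\sum_(0 <= k <oo) ((lam k) `^ p)%:E < +oo)%E -> lam @ \oo --> 0.
Proof.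
move=> p0 l0 hs.
have hc : cvgn (series (fun k => lam k `^ p)).
  apply: nnseries_is_cvg; first by move=> i; apply: powR_ge0.
  suff -> : (\sum_(k <oo) (lam k `^ p)%:E = \sum_(0 <= k <oo) (lam k `^ p)%:E)%E by [].
  by congr (lim (_ @ \oo)); apply/funext => N; rewrite big_mkord.
have h0 := cvg_series_cvg_0 hc.
apply/(@cvgr0Pnorm_lt R R) => e e0.
have H1 := (@cvgr0Pnorm_lt R R _ _ _ _).1 h0 (e `^ p) (powR_gt0 _ e0).
near=> k.
have hk : `|lam k `^ p| < e `^ p by near: k; apply: H1.
rewrite ger0_norm //.
rewrite ltNge; apply/negP => ek.
move: hk; rewrite ger0_norm ?powR_ge0 // ltNge => /negP; apply.
by apply: ge0_ler_powR => //; [exact: ltW | rewrite nnegrE ltW | rewrite nnegrE].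
Unshelve. all: by end_near.
Qed.

Lemma in_DA (R : realType) n m (nrm : 'rV[R]_n -> R) f (U : set 'rV[R]_m) A
  (r M : R) (lam : R -> nat -> R) y :
  is_norm nrm -> (lam r) @ \oo --> 0 ->
  (forall k s t, 0 <= s -> s <= t -> t <= r -> lam s k <= lam t k) ->
  (forall x, dist nrm x A <= r -> exists pi, admissible U pi /\
      forall k, dist nrm (traj f x pi k) A <= M * lam (dist nrm x A) k) ->
  0 < M -> dist nrm y A <= r -> DA nrm f U A y.
Proof.
move=> hn hl hmono stab M0 dy.
have [pi [adm H]] := stab y dy.
exists pi; split => //.
apply/(@cvgr0Pnorm_lt R R) => e e0.
have H1 := (@cvgr0Pnorm_lt R R _ _ _ _).1 hl (e / M) (divr_gt0 e0 M0).
near=> k.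
have hk : `|lam r k| < e / M by near: k; apply: H1.
rewrite ger0_norm ?dist_ge0 //.
apply: (le_lt_trans (H k)).
have h1 : lam (dist nrm y A) k <= lam r k.
  by apply: hmono => //; apply: dist_ge0.
have h2 : lam r k < e / M by apply: le_lt_trans hk; apply: ler_norm.
have -> : e = M * (e / M) by rewrite mulrC divfK // gt_eqF.
by rewrite ltr_pM2l //; apply: le_lt_trans h2.
Unshelve. all: by end_near.
Qed.

Lemma DA_back (R : realType) n m (nrm : 'rV[R]_n -> R) f (U : set 'rV[R]_m) A x pi k :
  admissible U pi -> DA nrm f U A (traj f x pi k) -> DA nrm f U A x.
Proof.
move=> adm [pi' [adm' H]].
exists (fun i => if (i < k)%N then pi i else pi' (i - k)%N); split.
  by move=> i; case: ifP.
rewrite -(cvg_shiftn k) /=.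
suff -> : (fun j => dist nrm (traj f x (fun i => if (i < k)%N then pi i else pi' (i - k)%N) (j + k)) A)
   = (fun j => dist nrm (traj f (traj f x pi k) pi' j) A) by [].
by apply/funext => j; rewrite traj_cat.
Qed.

Theorem theorem14 (R : realType) (n m : nat)
  (nrm : 'rV[R]_n -> R) (f : 'rV[R]_n -> 'rV[R]_m -> 'rV[R]_n)
  (U : set 'rV[R]_m) (A : set 'rV[R]_n)
  (alpha : 'rV[R]_n -> R) (p lo hi pbar : R)
  (w : set 'rV[R]_n -> R) :
  is_norm nrm ->
  continuous (fun xu : 'rV[R]_n * 'rV[R]_m => f xu.1 xu.2) ->
  compact U -> U !=set0 ->
  Kset A ->
  controlled_invariant f U A ->
  local_lp_stabilizable nrm f U A p ->
  continuous alpha ->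
  0 < lo -> 0 < hi -> p <= pbar ->
  (forall x, 0 <= alpha x) ->
  (forall x, lo * (dist nrm x A) `^ pbar <= alpha x /\
             alpha x <= hi * (dist nrm x A) `^ pbar) ->
  (exists B : R, forall X, Kset X -> `|w X| <= B) ->
  (forall X, Kset X ->
     w X - w (Fimg f U X) = xi alpha X * (1 - w (Fimg f U X))) ->
  (forall X, Kset X -> X `&` DA nrm f U A !=set0 ->
     (fun k => w (Reach f U X k)) @ \oo --> (0 : R)) ->
  forall X, Kset X -> w X = Wfun alpha f U X.
Proof.
move=> hn hf cU U0 KA _ stabl acont lo0 hi0 ppbar a0 abnd [B hB] hrec hlim X KX.
case: stabl => [r [M [lam [r0 [M1 [p0 [lam0 [_ [lammono [_ [_ [_ [sumfin stab]]]]]]]]]]]]].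
have KR : forall k, Kset (Reach f U X k) by move=> k; apply: Kset_Reach.
pose P := fun k => Psi alpha (Reach f U X k).
have P0 : forall k, 0 <= P k.
  by move=> k; apply: Psi_ge; [exact: (KR k).2 | move=> y _; apply: a0].
pose S := fun k => \sum_(0 <= j < k) P j.
have Iden : forall k, 1 - w X = expR (- S k) * (1 - w (Reach f U X k)).
  elim => [|k IH].
    by rewrite /S big_geq // oppr0 expR0 mul1r Reach_0.
  have := hrec _ (KR k); rewrite -Reach_S // /xi -/(P k) => hk.
  rewrite IH /S big_nat_recr //= opprD expRD.
  have -> : w (Reach f U X k) = w (Reach f U X k.+1) +
      (1 - expR (- P k)) * (1 - w (Reach f U X k.+1)) by rewrite -hk addrC subrK.
  ring.
have VE : Vfun alpha f U X = limn (fun N => (S N)%:E).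
  by rewrite /Vfun; congr (lim (_ @ \oo)); apply/funext => N; rewrite sumEFin.
have Snd : nondecreasing_seq S.
  by move=> i j ij; apply: (@nondecreasing_series R P predT 0%N) => // k _ _; apply: P0.
have M0 : 0 < M by lra.
have hl : (lam r) @ \oo --> 0.
  apply: (@lam_cvg0 R (lam r) p p0 _ sumfin).
  by move=> k; apply: lam0; rewrite lexx ltW.
pose c := lo * r `^ pbar.
have pb0 : 0 <= pbar by lra.
have c0 : 0 < c by rewrite mulr_gt0 // powR_gt0.
have noDA : ~ (X `&` DA nrm f U A !=set0) -> forall k, c <= P k.
  move=> nD k; apply: Psi_ge; first exact: (KR k).2.
  move=> y [x [pi [Xx adm ->]]].
  have dr : r < dist nrm (traj f x pi k) A.
    rewrite ltNge; apply/negP => dy; apply: nD; exists x; split => //.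
    apply: (@DA_back R n m nrm f U A x pi k adm); exact: (@in_DA R n m nrm f U A r M lam _ hn hl lammono stab M0 dy).
  apply: le_trans _ (abnd _).1; rewrite /c ler_pM2l //.
  apply: ge0_ler_powR => //; rewrite ?nnegrE; [exact: ltW | exact: le_trans (ltW r0) (ltW dr) | exact: ltW].
have SS : forall k, S k.+1 = S k + P k by move=> k; rewrite /S big_nat_recr.
have Sge : (forall k, c <= P k) -> forall k, k%:R * c <= S k.
  move=> hc; elim => [|k IH]; first by rewrite /S big_geq // mul0r.
  rewrite SS; have := hc k; rewrite mulrSr mulrDl mul1r; lra.
have [ub|nub] := pselect (has_ubound (range S)).
  have cS : cvgn S := nondecreasing_is_cvgn Snd ub.
  have hW : Wfun alpha f U X = 1 - expR (- limn S).
    rewrite /Wfun VE.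
    by have -> : limn (fun N => (S N)%:E) = (limn S)%:E := EFin_lim cS.
  have DAX : X `&` DA nrm f U A !=set0.
    apply: contrapT => nD; have hc := noDA nD.
    case: ub => Mx hMx.
    pose q := Mx / c.
    have hk := truncnS_gt q.
    have h1 := Sge hc (Num.Def.trunc q).+1.
    have h2 : S (Num.Def.trunc q).+1 <= Mx by apply: hMx; exists (Num.Def.trunc q).+1.
    have hq : Mx = q * c by rewrite /q divfK // gt_eqF.
    move: hk h1 h2; set K := ((Num.Def.trunc q).+1)%:R; move=> hk h1 h2.
    nra.
  have hw0 := hlim X KX DAX.
  have hcv : (fun k => expR (- S k) * (1 - w (Reach f U X k))) @ \oo --> expR (- limn S) * (1 - 0).
    apply: cvgM.
      apply: (cvg_comp (fun k => - S k) expR); first exact: cvgN cS.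
      exact: continuous_expR.
    exact: cvgB (cvg_cst _) hw0.
  have E : (fun k => expR (- S k) * (1 - w (Reach f U X k))) = fun=> 1 - w X.
    by apply/funext => k; rewrite -Iden.
  rewrite E in hcv.
  have h : limn (fun _ : nat => 1 - w X) = expR (- limn S) * (1 - 0).
    by apply: cvg_lim => //; exact: Rhausdorff.
  have h2 : limn (fun _ : nat => 1 - w X) = 1 - w X.
    by apply: cvg_lim; [exact: Rhausdorff | exact: cvg_cst].
  rewrite h2 subr0 mulr1 in h.
  rewrite hW; lra.
have big : forall Mx, exists k, Mx < S k.
  move=> Mx; apply: contrapT => h; apply: nub; exists Mx => _ [k _ <-].
  rewrite leNgt; apply/negP => hk; apply: h; by exists k.
have hW : Wfun alpha f U X = 1.
  have hoo : (fun N => (S N)%:E) @ \oo --> +oo%E.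
    apply/cvgeryP/cvgryPge => Mx; have [k hk] := big Mx.
    near=> N; have kN : (k <= N)%N by near: N; exists k.
    exact: le_trans (ltW hk) (Snd _ _ kN).
  by rewrite /Wfun VE (cvg_lim (@ereal_hausdorff R) hoo).
rewrite hW; apply: contrapT => hne.
have a0' : 0 < `|1 - w X| by rewrite normr_gt0 subr_eq0 eq_sym; apply/eqP.
have [k hk] := big ((1 + B) / `|1 - w X|).
have hb : `|1 - w (Reach f U X k)| <= 1 + B.
  apply: le_trans (ler_normB _ _) _; rewrite normr1 lerD2l; exact: hB.
have ha : `|1 - w X| = expR (- S k) * `|1 - w (Reach f U X k)|.
  by rewrite {1}(Iden k) normrM ger0_norm // ltW // expR_gt0.
have hE : `|1 - w X| * expR (S k) = `|1 - w (Reach f U X k)|.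
  by rewrite {1}ha mulrAC -expRD addNr expR0 mul1r.
have h2 := expR_ge1Dx (S k).
have h3 : 1 + B < `|1 - w X| * S k.
  have -> : 1 + B = `|1 - w X| * ((1 + B) / `|1 - w X|) by rewrite mulrC divfK // gt_eqF.
  by rewrite ltr_pM2l.
have h4 := mulr_ge0 (ltW a0') (ltac:(by rewrite subr_ge0) : 0 <= expR (S k) - (1 + S k)).
move: hE h3 h4 hb a0'; set a := `|1 - w X|; set E := expR (S k).
move=> hE h3 h4 hb a0'.
nra.
Unshelve. all: by end_near.
Qed.
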